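(* For every regular command $\mathsf{r}$ and all $P,Q\subseteq\Sigma$, the SIL triple $\langle P\rangle\,\mathsf{r}\,\langle Q\rangle$ is derivable in the SIL proof system if and only if it is valid, i.e. if and only if $\overleftarrow{[\![\mathsf{r}]\!]}Q\supseteq P$.
   Context: $\mathrm{Var}$ is a finite set of variables and $\Sigma=\mathrm{Var}\to\mathbb{Z}$ is the set of states. Regular commands: atomic commands $\mathsf{c}::=\mathtt{skip}\mid x:=a\mid b?$ (integer arithmetic expression $a$, Boolean expression $b$, evaluated as usual) and $\mathsf{r}::=\mathsf{c}\mid \mathsf{r};\mathsf{r}\mid\mathsf{r}\boxplus\mathsf{r}\mid\mathsf{r}^*$. For $S\subseteq\Sigma$: $[\![\mathtt{skip}]\!]S=S$, $[\![x:=a]\!]S=\{\sigma[x\mapsto[\![a]\!]\sigma]\mid\sigma\in S\}$, $[\![b?]\!]S=\{\sigma\in S\mid[\![b]\!]\sigma=\mathrm{true}\}$. Forward collecting semantics: $\overrightarrow{[\![\mathsf{c}]\!]}S=[\![\mathsf{c}]\!]S$, $\overrightarrow{[\![\mathsf{r}_1;\mathsf{r}_2]\!]}S=\overrightarrow{[\![\mathsf{r}_2]\!]}(\overrightarrow{[\![\mathsf{r}_1]\!]}S)$, $\overrightarrow{[\![\mathsf{r}_1\boxplus\mathsf{r}_2]\!]}S=\overrightarrow{[\![\mathsf{r}_1]\!]}S\cup\overrightarrow{[\![\mathsf{r}_2]\!]}S$, $\overrightarrow{[\![\mathsf{r}^*]\!]}S=\bigcup_{n\ge0}\overrightarrow{[\![\mathsf{r}]\!]}^nS$.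 Backward semantics: $\overleftarrow{[\![\mathsf{r}]\!]}\sigma'=\{\sigma\mid\sigma'\in\overrightarrow{[\![\mathsf{r}]\!]}\{\sigma\}\}$, lifted to sets by union. The SIL proof system derives triples $\langle P\rangle\,\mathsf{r}\,\langle Q\rangle$ ($P,Q\subseteq\Sigma$) with exactly the following rules: (atom) $\langle\overleftarrow{[\![\mathsf{c}]\!]}Q\rangle\,\mathsf{c}\,\langle Q\rangle$ for every atomic $\mathsf{c}$ and $Q$; (cons) from $P\subseteq P'$, $\langle P'\rangle\,\mathsf{r}\,\langle Q'\rangle$, $Q'\subseteq Q$ derive $\langle P\rangle\,\mathsf{r}\,\langle Q\rangle$; (seq) from $\langle P\rangle\,\mathsf{r}_1\,\langle R\rangle$ and $\langle R\rangle\,\mathsf{r}_2\,\langle Q\rangle$ derive $\langle P\rangle\,\mathsf{r}_1;\mathsf{r}_2\,\langle Q\rangle$; (choice) from $\langle P_1\rangle\,\mathsf{r}_1\,\langle Q\rangle$ and $\langle P_2\rangle\,\mathsf{r}_2\,\langle Q\rangle$ derive $\langle P_1\cup P_2\rangle\,\mathsf{r}_1\boxplus\mathsf{r}_2\,\langle Q\rangle$; (iter) from $\langle Q_{n+1}\rangle\,\mathsf{r}\,\langle Q_n\rangle$ for all $n\ge0$ (infinitely many premises) derive $\langle\bigcup_{n\ge0}Q_n\rangle\,\mathsf{r}^*\,\langle Q_0\rangle$. Derivations may be infinitely branching but are well-founded. *)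

(* Defs.v *)
From Stdlib Require Import ZArith List.
Open Scope Z_scope.

Section Lang.
Variable V : Type.
Variable V_eq_dec : forall x y : V, {x = y} + {x <> y}.

Definition state := V -> Z.
Definition pset := state -> Prop.

Definition upd (s : state) (x : V) (v : Z) : state :=
  fun y => if V_eq_dec x y then v else s y.

Inductive aexp : Type :=
| ANum (n : Z) | AVar (x : V)
| APlus (a1 a2 : aexp) | AMinus (a1 a2 : aexp) | AMult (a1 a2 : aexp).

Fixpoint aeval (s : state) (a : aexp) : Z :=
  match a with
  | ANum n => n | AVar x => s x
  | APlus a1 a2 => aeval s a1 + aeval s a2
  | AMinus a1 a2 => aeval s a1 - aeval s a2
  | AMult a1 a2 => aeval s a1 * aeval s a2
  end.

Inductive bexp : Type :=
| BTrue | BFalse | BEq (a1 a2 : aexp) | BLe (a1 a2 : aexp)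
| BNot (b : bexp) | BAnd (b1 b2 : bexp) | BOr (b1 b2 : bexp).

Fixpoint beval (s : state) (b : bexp) : bool :=
  match b with
  | BTrue => true | BFalse => false
  | BEq a1 a2 => Z.eqb (aeval s a1) (aeval s a2)
  | BLe a1 a2 => Z.leb (aeval s a1) (aeval s a2)
  | BNot b => negb (beval s b)
  | BAnd b1 b2 => andb (beval s b1) (beval s b2)
  | BOr b1 b2 => orb (beval s b1) (beval s b2)
  end.

Inductive atom : Type :=
| ASkip | AAssign (x : V) (a : aexp) | AGuard (b : bexp).

Inductive rcmd : Type :=
| RAtom (c : atom) | RSeq (r1 r2 : rcmd) | RChoice (r1 r2 : rcmd) | RStar (r : rcmd).

Definition atom_sem (c : atom) (S : pset) : pset :=
  match c with
  | ASkip => S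
  | AAssign x a => fun s' => exists s, S s /\ s' = upd s x (aeval s a)
  | AGuard b => fun s => S s /\ beval s b = true
  end.

Fixpoint iter_n (f : pset -> pset) (n : nat) (S : pset) : pset :=
  match n with O => S | Datatypes.S n' => f (iter_n f n' S) end.

Fixpoint fwd (r : rcmd) (S : pset) : pset :=
  match r with
  | RAtom c => atom_sem c S
  | RSeq r1 r2 => fwd r2 (fwd r1 S)
  | RChoice r1 r2 => fun s => fwd r1 S s \/ fwd r2 S s
  | RStar r => fun s => exists n, iter_n (fwd r) n S s
  end.

Definition singleton (s : state) : pset := fun t => t = s.

Definition bwd (r : rcmd) (Q : pset) : pset :=
  fun s => exists s', Q s' /\ fwd r (singleton s) s'.

Definition bwd_atom (c : atom) (Q : pset) : pset :=
  fun s => exists s', Q s' /\ atom_sem c (singleton s) s'.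

Definition subset (A B : pset) : Prop := forall s, A s -> B s.

Inductive sil : pset -> rcmd -> pset -> Prop :=
| sil_atom : forall c Q, sil (bwd_atom c Q) (RAtom c) Q
| sil_cons : forall P P' r Q Q', subset P P' -> sil P' r Q' -> subset Q' Q -> sil P r Q
| sil_seq : forall P R Q r1 r2, sil P r1 R -> sil R r2 Q -> sil P (RSeq r1 r2) Q
| sil_choice : forall P1 P2 Q r1 r2, sil P1 r1 Q -> sil P2 r2 Q ->
    sil (fun s => P1 s \/ P2 s) (RChoice r1 r2) Q
| sil_iter : forall (Qs : nat -> pset) r,
    (forall n, sil (Qs (Datatypes.S n)) r (Qs n)) ->
    sil (fun s => exists n, Qs n s) (RStar r) (Qs O).

End Lang.

Arguments ANum {V}. Arguments ASkip {V}. Arguments BTrue {V}.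

(* Main.v *)
Require Import Defs.
From Stdlib Require Import ZArith List.

Section Proofs.
Variable V : Type.
Variable D : forall x y : V, {x = y} + {x <> y}.

Definition mono (f : pset V -> pset V) :=
  forall A B, subset V A B -> subset V (f A) (f B).
Definition addi (f : pset V -> pset V) :=
  forall S u, f S u -> exists t, S t /\ f (singleton V t) u.

Lemma iter_mono f : mono f -> forall n, mono (iter_n V f n).
Proof. intros Hm n; induction n; simpl; intros A B H; auto. Qed.

Lemma iter_addi f : mono f -> addi f -> forall n, addi (iter_n V f n).
Proof.
  intros Hm Ha n; induction n; simpl; intros S u H.
  - exists u; split; auto. reflexivity.
  - destruct (Ha _ _ H) as [v [Hv Hf]].
    destruct (IHn _ _ Hv) as [t [Ht Hi]].
    exists t; split; auto.
    apply (Hm (singleton V v)); auto.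
    intros x Hx; unfold singleton in Hx; subst; auto.
Qed.

Lemma iter_comm f : forall n S, iter_n V f n (f S) = iter_n V f (Datatypes.S n) S.
Proof. induction n; intros; simpl; auto. rewrite IHn; reflexivity. Qed.

Lemma fwd_mono r : mono (fwd V D r).
Proof.
  induction r; intros A B H; simpl.
  - destruct c; simpl; intros s Hs; auto.
    + destruct Hs as [s0 [H1 H2]]; eauto.
    + destruct Hs; auto.
  - apply IHr2, IHr1, H.
  - intros s [Hs|Hs]; [left; apply (IHr1 A)|right; apply (IHr2 A)]; auto.
  - intros s [n Hn]; exists n; apply (iter_mono _ IHr n A); auto.
Qed.

Lemma fwd_addi r : addi (fwd V D r).
Proof.
  induction r; intros S u H; simpl in *.
  - destruct c; simpl in *.
    + exists u; split; auto; reflexivity.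
    + destruct H as [s [H1 H2]]; exists s; split; auto; exists s; split; auto; reflexivity.
    + destruct H; exists u; split; auto; split; auto; reflexivity.
  - destruct (IHr2 _ _ H) as [t [Ht Hf]].
    destruct (IHr1 _ _ Ht) as [t0 [Ht0 Hf0]].
    exists t0; split; auto.
    apply (fwd_mono r2 (singleton V t)); auto.
    intros x Hx; unfold singleton in Hx; subst; auto.
  - destruct H as [H|H]; [destruct (IHr1 _ _ H) as [t [Ht Hf]]|destruct (IHr2 _ _ H) as [t [Ht Hf]]];
      exists t; split; auto.
  - destruct H as [n Hn].
    destruct (iter_addi _ (fwd_mono r) IHr n _ _ Hn) as [t [Ht Hf]].
    exists t; split; auto; exists n; auto.
Qed.

Lemma sound P r Q : sil V D P r Q -> subset V P (bwd V D r Q).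
Proof.
  induction 1.
  - intros s Hs; exact Hs.
  - intros s Hs. destruct (IHsil s (H s Hs)) as [s' [H2 H3]]; exists s'; split; auto.
  - intros s Hs. destruct (IHsil1 s Hs) as [t [Ht Hf]].
    destruct (IHsil2 t Ht) as [u [Hu Hg]].
    exists u; split; auto; simpl.
    apply (fwd_mono r2 (singleton V t)); auto.
    intros x Hx; unfold singleton in Hx; subst; auto.
  - intros s [Hs|Hs]; [destruct (IHsil1 s Hs) as [t [Ht Hf]]|destruct (IHsil2 s Hs) as [t [Ht Hf]]];
      exists t; split; simpl; auto.
  - assert (K : forall n s, Qs n s -> bwd V D (RStar V r) (Qs O) s).
    { induction n; intros s Hs.
      - exists s; split; auto; exists O; simpl; reflexivity.
      - destruct (H0 n s Hs) as [t [Ht Hf]].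
        destruct (IHn t Ht) as [u [Hu [m Hm]]].
        exists u; split; auto. exists (Datatypes.S m).
        rewrite <- iter_comm.
        apply (iter_mono _ (fwd_mono r) m (singleton V t)); auto.
        intros x Hx; unfold singleton in Hx; subst; auto. }
    intros s [n Hn]; eauto.
Qed.

Lemma complete r : forall Q, sil V D (bwd V D r Q) r Q.
Proof.
  induction r; intros Q.
  - exact (sil_atom V D c Q).
  - eapply sil_cons; [| apply (sil_seq V D _ (bwd V D r2 Q)); [apply IHr1 | apply IHr2] | intros x Hx; exact Hx].
    intros s [u [Hu Hf]]; simpl in Hf.
    destruct (fwd_addi r2 _ _ Hf) as [t [Ht Hg]].
    exists t; split; auto; exists u; auto.
  - eapply sil_cons; [| apply sil_choice; [apply IHr1 | apply IHr2] | intros x Hx; exact Hx].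
    intros s [u [Hu [Hf|Hf]]]; [left|right]; exists u; auto.
  - set (Qs := fun n s => exists s', Q s' /\ iter_n V (fwd V D r) n (singleton V s) s').
    eapply sil_cons; [| apply (sil_iter V D Qs r) |].
    + intros s [u [Hu [n Hn]]]; exists n; exists u; auto.
    + intros n. eapply sil_cons; [| apply IHr | intros x Hx; exact Hx].
      intros s [u [Hu Hn]].
      rewrite <- iter_comm in Hn.
      destruct (iter_addi _ (fwd_mono r) (fwd_addi r) n _ _ Hn) as [t [Ht Hf]].
      exists t; split; auto. exists u; auto.
    + intros x [s' [Hs Hx]]; simpl in Hx; unfold singleton in Hx; subst; auto.
Qed.

End Proofs.

Theorem mainTheorem3 (V : Type) (V_eq_dec : forall x y : V, {x = y} + {x <> y})
  (V_fin : exists l : list V, forall x : V, In x l)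
  (r : rcmd V) (P Q : pset V) :
  sil V V_eq_dec P r Q <-> subset V P (bwd V V_eq_dec r Q).
Proof.
  split; [apply sound|].
  intros H; eapply sil_cons; [exact H | apply complete | intros x Hx; exact Hx].
Qed.
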